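(* Let $N$ be a positive integer and let the edges of the complete $4$-uniform hypergraph $\mathcal{K}^4_N$ be colored red and blue. Let $\mathcal{P}=e_1e_2\ldots e_n$ be a red loose path which is maximal with respect to a set $W\subseteq V(\mathcal{K}^4_N)\setminus V(\mathcal{P})$ with $|W|\ge 4$. Then for every two consecutive edges $e_j,e_{j+1}$ of $\mathcal{P}$ there exist distinct vertices $x,y\in W$ and distinct vertices $a_1,\dots,a_5\in e_j\cup e_{j+1}$ such that the edges $f=\{x,a_1,a_2,a_3\}$ and $g=\{a_3,a_4,a_5,y\}$ are both blue (so $fg$ is a blue loose path with two edges), and at least one vertex of $e_{j+1}\setminus e_j$ does not belong to $S=\{a_1,\dots,a_5\}$. Moreover, there are subsets $W_1,W_2\subseteq W$ with $|W_1|\ge |W|-2$ and $|W_2|\ge |W|-3$ such that for all distinct $x'\in W_1$ and $y'\in W_2$ the edges $(f\setminus\{x\})\cup\{x'\}$ and $(g\setminus\{y\})\cup\{y'\}$ are both blue.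
   Context: A $4$-uniform loose path $\mathcal{P}=e_1e_2\ldots e_n$ (a copy of $\mathcal{P}^4_n$) has vertex set $\{v_1,\dots,v_{3n+1}\}$ and edges $e_i=\{v_{3i-2},v_{3i-1},v_{3i},v_{3i+1}\}$, $1\le i\le n$; the first vertex of $e_i$ is $f_{\mathcal{P},e_i}=v_{3i-2}$ and its last vertex is $l_{\mathcal{P},e_i}=v_{3i+1}$. A red path is one all of whose edges are red; $\|\mathcal{P}\|$ denotes the number of edges. A red path $\mathcal{P}=e_1\ldots e_n$ is maximal with respect to $W\subseteq V\setminus V(\mathcal{P})$ if there is no $W'\subseteq W$, no $1\le r\le n$ and no $1\le i\le n-r+1$ such that $\mathcal{P}'=e_1\ldots e_{i-1}e'_ie'_{i+1}\ldots e'_{i+r}e_{i+r}\ldots e_n$ (the edges $e_i,\dots,e_{i+r-1}$ replaced by $r+1$ new edges $e'_i,\dots,e'_{i+r}$) is a red loose path with $n+1$ edges satisfying: (i) $V(\mathcal{P}')=V(\mathcal{P})\cup W'$; (ii) if $i=1$ then $f_{\mathcal{P}',e'_i}=f_{\mathcal{P},e_i}$; (iii) if $i+r-1=n$ then $l_{\mathcal{P}',e'_{i+r}}=l_{\mathcal{P},e_n}$. *)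

(* Defs.v *)
From mathcomp Require Import all_boot.
Set Implicit Arguments. Unset Strict Implicit. Unset Printing Implicit Defensive.

(* Vertices of K^4_N are 'I_N.  A 2-colouring of the edges (4-subsets) is a
   map [red : {set 'I_N} -> bool]; an edge e is red iff [red e], blue iff
   [~~ red e].  Only its values on 4-subsets matter. *)

(* A loose path P = e_1 ... e_n is given by its vertex sequence
   s = [v_1; ...; v_{3n+1}].  [pedge s i] is the edge e_i (1-indexed):
   {v_{3i-2}, v_{3i-1}, v_{3i}, v_{3i+1}}. *)
Definition pedge (N : nat) (s : seq 'I_N) (i : nat) : {set 'I_N} :=
  [set x in take 4 (drop (3 * i.-1) s)].

Definition red_loose_path (N : nat) (red : {set 'I_N} -> bool)
    (s : seq 'I_N) (n : nat) : Prop :=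
  [/\ uniq s, size s = 3 * n + 1 & forall i, 1 <= i <= n -> red (pedge s i)].

(* Maximality of the red path s (with n edges) with respect to W, as in the
   paper: there is no W' ⊆ W, 1 <= r <= n, 1 <= i <= n-r+1 and red loose
   path P' (vertex sequence s') with n+1 edges, whose edges are
   e_1..e_{i-1}, e'_i..e'_{i+r}, e_{i+r}..e_n, with V(P') = V(P) ∪ W',
   first vertex preserved if i = 1 and last vertex preserved if i+r-1 = n. *)
Definition maximal_wrt (N : nat) (red : {set 'I_N} -> bool)
    (s : seq 'I_N) (n : nat) (W : {set 'I_N}) : Prop :=
  ~ exists (W' : {set 'I_N}) (s' : seq 'I_N) (r i : nat),
      [/\ W' \subset W, 1 <= r <= n, 1 <= i <= n - r + 1
        & red_loose_path red s' n.+1 ] /\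
      [/\ (forall p, 1 <= p <= i - 1 -> pedge s' p = pedge s p),
          (forall p, i + r + 1 <= p <= n + 1 -> pedge s' p = pedge s p.-1),
          [set x in s'] = [set x in s] :|: W',
          (i = 1 -> forall v, head v s' = head v s)
        & (i + r - 1 = n -> forall v, last v s' = last v s)].

(* Main.v *)
Require Import Defs.
From mathcomp Require Import all_boot.
From mathcomp Require Import zify.
Set Implicit Arguments. Unset Strict Implicit. Unset Printing Implicit Defensive.

Lemma take_drop_mk (T : Type) (x0 : T) (s : seq T) k m :
  k + m <= size s -> take m (drop k s) = mkseq (fun i => nth x0 s (k + i)) m.
Proof.
move=> H; apply: (@eq_from_nth _ x0).
  rewrite size_mkseq size_take size_drop; case: ifP => //; lia.
move=> i; rewrite size_take size_drop => Hi.
have Him : i < m by move: Hi; case: ifP; lia.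
by rewrite nth_take // nth_drop nth_mkseq.
Qed.

Lemma take4_prefix (T : Type) (s s' : seq T) m k :
  take m s = take m s' -> k + 4 <= m -> take 4 (drop k s) = take 4 (drop k s').
Proof.
move=> E Hk; rewrite !take_drop.
by rewrite -(take_takel s (_ : 4 + k <= m)) ?E ?take_takel //; lia.
Qed.

Lemma sdr3 (T : finType) (X Y Z : {set T}) :
  0 < #|X| -> 1 < #|Y| -> 2 < #|Z| ->
  exists x y z, [/\ x \in X, y \in Y, z \in Z & uniq [:: x; y; z]].
Proof.
move=> /card_gt0P [x Hx] HY HZ.
have : 0 < #|Y :\ x|.
  move: HY; rewrite (cardsD1 x Y); case: (x \in Y) => /=; lia.
move=> /card_gt0P [y]; rewrite !inE => /andP [yx Hy].
have : 0 < #|Z :\ x :\ y|.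
  move: HZ; rewrite (cardsD1 x Z) (cardsD1 y (Z :\ x)).
  case: (x \in Z); case: (y \in Z :\ x) => /=; lia.
move=> /card_gt0P [z]; rewrite !inE => /andP [zy /andP [zx Hz]].
exists x, y, z; split => //=.
by rewrite !inE negb_or eq_sym yx eq_sym zx eq_sym zy.
Qed.

Lemma head_cat_cons (T : Type) (v : T) A y t t' :
  head v (A ++ y :: t) = head v (A ++ y :: t').
Proof. by case: A. Qed.

Lemma last_cat_ne (T : Type) (v : T) A A' C :
  0 < size C -> last v (A ++ C) = last v (A' ++ C).
Proof. by case: C => // c C _; rewrite !last_cat. Qed.

Lemma drop_shift (T : Type) (X Y C : seq T) a b :
  size X <= a -> size Y <= b -> a - size X = b - size Y ->
  drop a (X ++ C) = drop b (Y ++ C).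
Proof.
move=> ha hb e; rewrite !drop_cat.
have -> : (a < size X) = false by apply/negbTE; rewrite -leqNgt.
have -> : (b < size Y) = false by apply/negbTE; rewrite -leqNgt.
by rewrite e.
Qed.


Definition checkp (a1 a2 a3 a4 a5 : nat) (t1 t2 : seq nat) : bool :=
  [&& uniq [:: a1; a2; a3; a4; a5], all (fun a => a < 7) [:: a1; a2; a3; a4; a5],
      ~~ all (fun z => z \in [:: a1; a2; a3; a4; a5]) [:: 4; 5; 6],
      perm_eq t1 [:: a1; a2; a3] & perm_eq t2 [:: a3; a4; a5]].

Definition checkc (k1 k2 k3 k4 k5 : nat) (tA tB tC : seq nat) : bool :=
  [&& perm_eq [:: k1; k2; k3; k4; k5] [:: 1; 2; 3; 4; 5],
      perm_eq [:: 0; k3; k1] tA, perm_eq [:: k1; k4; k2] tB & perm_eq [:: k2; k5; 6] tC].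

Definition F3 (X Y Z : nat) : Prop := 0 < X -> 1 < Y -> 2 < Z -> False.

Lemma contra_b k m r : m <= k -> k < r -> r <= m -> False.
Proof. move=> h1 h2 h3; move: h1 h2 h3; lia. Qed.

Lemma core (G : Prop) (r : seq nat -> nat)
  (PG : forall a1 a2 a3 a4 a5 t1 t2, checkp a1 a2 a3 a4 a5 t1 t2 -> r t1 <= 2 -> r t2 <= 3 -> G)
  (CF : forall k1 k2 k3 k4 k5 tA tB tC, checkc k1 k2 k3 k4 k5 tA tB tC ->
     [/\ F3 (r tA) (r tB) (r tC), F3 (r tA) (r tC) (r tB), F3 (r tB) (r tA) (r tC)
       & [/\ F3 (r tB) (r tC) (r tA), F3 (r tC) (r tA) (r tB) & F3 (r tC) (r tB) (r tA)]]) : G.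
Proof.
  case: (leqP (r [:: 0; 1; 2]) 0) => [H0|H37].
  {
    case: (leqP (r [:: 1; 3; 5]) 3) => H8; first exact: (PG 0 2 1 3 5 [:: 0; 1; 2] [:: 1; 3; 5] isT (leq_trans H0 (isT : 0 <= 2)) H8).
    case: (leqP (r [:: 1; 5; 6]) 3) => H12; first exact: (PG 0 2 1 5 6 [:: 0; 1; 2] [:: 1; 5; 6] isT (leq_trans H0 (isT : 0 <= 2)) H12).
    case: (leqP (r [:: 2; 3; 6]) 3) => H15; first exact: (PG 0 1 2 3 6 [:: 0; 1; 2] [:: 2; 3; 6] isT (leq_trans H0 (isT : 0 <= 2)) H15).
    case: (leqP (r [:: 2; 4; 6]) 3) => H17; first exact: (PG 0 1 2 4 6 [:: 0; 1; 2] [:: 2; 4; 6] isT (leq_trans H0 (isT : 0 <= 2)) H17).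
    case: (leqP (r [:: 0; 1; 4]) 0) => H19; last by case: (CF 1 3 4 5 2 [:: 0; 1; 4] [:: 1; 3; 5] [:: 2; 3; 6] isT) => C1 C2 C3 [C4 C5 C6]; case: (C1 H19 (leq_ltn_trans (isT : 1 <= 3) H8) (leq_ltn_trans (isT : 2 <= 3) H15)).
    case: (leqP (r [:: 0; 2; 3]) 3) => H20; first exact: (PG 1 4 0 2 3 [:: 0; 1; 4] [:: 0; 2; 3] isT (leq_trans H19 (isT : 0 <= 2)) H20).
    case: (leqP (r [:: 1; 2; 5]) 3) => H24; first exact: (PG 0 4 1 2 5 [:: 0; 1; 4] [:: 1; 2; 5] isT (leq_trans H19 (isT : 0 <= 2)) H24).
    case: (leqP (r [:: 0; 1; 3]) 0) => H28; last by case: (CF 1 2 3 5 4 [:: 0; 1; 3] [:: 1; 2; 5] [:: 2; 4; 6] isT) => C1 C2 C3 [C4 C5 C6]; case: (C1 H28 (leq_ltn_trans (isT : 1 <= 3) H24) (leq_ltn_trans (isT : 2 <= 3) H17)).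
    case: (leqP (r [:: 1; 2; 4]) 3) => H30; first exact: (PG 0 3 1 2 4 [:: 0; 1; 3] [:: 1; 2; 4] isT (leq_trans H28 (isT : 0 <= 2)) H30).
    case: (leqP (r [:: 0; 2; 3]) 0) => H33; last by case: (CF 2 1 3 4 5 [:: 0; 2; 3] [:: 1; 2; 4] [:: 1; 5; 6] isT) => C1 C2 C3 [C4 C5 C6]; case: (C1 H33 (leq_ltn_trans (isT : 1 <= 3) H30) (leq_ltn_trans (isT : 2 <= 3) H12)).
    case: (contra_b (isT : 0 <= 3) H20 H33).
  }
  case: (leqP (r [:: 1; 3; 4]) 1) => [H38|H74].
  {
    case: (leqP (r [:: 0; 1; 5]) 3) => H40; first exact: (PG 3 4 1 0 5 [:: 1; 3; 4] [:: 0; 1; 5] isT (leq_trans H38 (isT : 1 <= 2)) H40).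
    case: (leqP (r [:: 1; 2; 5]) 3) => H48; first exact: (PG 3 4 1 2 5 [:: 1; 3; 4] [:: 1; 2; 5] isT (leq_trans H38 (isT : 1 <= 2)) H48).
    case: (leqP (r [:: 2; 3; 6]) 3) => H51; first exact: (PG 1 4 3 2 6 [:: 1; 3; 4] [:: 2; 3; 6] isT (leq_trans H38 (isT : 1 <= 2)) H51).
    case: (leqP (r [:: 2; 4; 6]) 3) => H53; first exact: (PG 1 3 4 2 6 [:: 1; 3; 4] [:: 2; 4; 6] isT (leq_trans H38 (isT : 1 <= 2)) H53).
    case: (leqP (r [:: 0; 1; 4]) 0) => H66; last by case: (CF 1 2 4 5 3 [:: 0; 1; 4] [:: 1; 2; 5] [:: 2; 3; 6] isT) => C1 C2 C3 [C4 C5 C6]; case: (C1 H66 (leq_ltn_trans (isT : 1 <= 3) H48) (leq_ltn_trans (isT : 2 <= 3) H51)).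
    case: (leqP (r [:: 1; 2; 3]) 3) => H67; first exact: (PG 0 4 1 2 3 [:: 0; 1; 4] [:: 1; 2; 3] isT (leq_trans H66 (isT : 0 <= 2)) H67).
    case: (leqP (r [:: 0; 1; 5]) 0) => H70; last by case: (CF 1 2 5 3 4 [:: 0; 1; 5] [:: 1; 2; 3] [:: 2; 4; 6] isT) => C1 C2 C3 [C4 C5 C6]; case: (C1 H70 (leq_ltn_trans (isT : 1 <= 3) H67) (leq_ltn_trans (isT : 2 <= 3) H53)).
    case: (contra_b (isT : 0 <= 3) H40 H70).
  }
  case: (leqP (r [:: 3; 5; 6]) 2) => H75; last by case: (CF 1 3 2 4 5 [:: 0; 1; 2] [:: 1; 3; 4] [:: 3; 5; 6] isT) => C1 C2 C3 [C4 C5 C6]; case: (C1 (leq_ltn_trans (isT : 0 <= 0) H37) (leq_ltn_trans (isT : 1 <= 1) H74) H75).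
  case: (leqP (r [:: 0; 1; 3]) 3) => H76; first exact: (PG 5 6 3 0 1 [:: 3; 5; 6] [:: 0; 1; 3] isT (leq_trans H75 (isT : 2 <= 2)) H76).
  case: (leqP (r [:: 0; 2; 3]) 3) => H79; first exact: (PG 5 6 3 0 2 [:: 3; 5; 6] [:: 0; 2; 3] isT (leq_trans H75 (isT : 2 <= 2)) H79).
  case: (leqP (r [:: 1; 2; 5]) 3) => H83; first exact: (PG 3 6 5 1 2 [:: 3; 5; 6] [:: 1; 2; 5] isT (leq_trans H75 (isT : 2 <= 2)) H83).
  case: (leqP (r [:: 2; 4; 6]) 2) => H85; last by case: (CF 1 2 3 5 4 [:: 0; 1; 3] [:: 1; 2; 5] [:: 2; 4; 6] isT) => C1 C2 C3 [C4 C5 C6]; case: (C1 (leq_ltn_trans (isT : 0 <= 3) H76) (leq_ltn_trans (isT : 1 <= 3) H83) H85).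
  case: (leqP (r [:: 0; 1; 4]) 3) => H87; first exact: (PG 2 6 4 0 1 [:: 2; 4; 6] [:: 0; 1; 4] isT (leq_trans H85 (isT : 2 <= 2)) H87).
  case: (leqP (r [:: 2; 3; 6]) 2) => H99; last by case: (CF 1 2 4 5 3 [:: 0; 1; 4] [:: 1; 2; 5] [:: 2; 3; 6] isT) => C1 C2 C3 [C4 C5 C6]; case: (C1 (leq_ltn_trans (isT : 0 <= 3) H87) (leq_ltn_trans (isT : 1 <= 3) H83) H99).
  case: (leqP (r [:: 1; 2; 4]) 3) => H103; first exact: (PG 3 6 2 1 4 [:: 2; 3; 6] [:: 1; 2; 4] isT (leq_trans H99 (isT : 2 <= 2)) H103).
  case: (leqP (r [:: 1; 5; 6]) 3) => H105; first exact: (PG 2 3 6 1 5 [:: 2; 3; 6] [:: 1; 5; 6] isT (leq_trans H99 (isT : 2 <= 2)) H105).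
  case: (leqP (r [:: 0; 2; 3]) 0) => H116; last by case: (CF 2 1 3 4 5 [:: 0; 2; 3] [:: 1; 2; 4] [:: 1; 5; 6] isT) => C1 C2 C3 [C4 C5 C6]; case: (C1 H116 (leq_ltn_trans (isT : 1 <= 3) H103) (leq_ltn_trans (isT : 2 <= 3) H105)).
  case: (contra_b (isT : 0 <= 3) H79 H116).
Qed.


Section Main.
Variables (N : nat) (red : {set 'I_N} -> bool) (s : seq 'I_N) (n : nat)
  (W : {set 'I_N}) (x0 : 'I_N) (j : nat).
Hypotheses (Us : uniq s) (Ss : size s = 3 * n + 1)
  (Rs : forall i, 1 <= i <= n -> red (pedge s i))
  (Dis : [disjoint W & [set x in s]]) (Max : maximal_wrt red s n W)
  (j1 : 1 <= j) (jn : j + 1 <= n) (W4 : 4 <= #|W|).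

Definition v k := nth x0 s (3 * j - 3 + k).
Definition tset (t : seq nat) : {set 'I_N} := [set y in map v t].
Definition R t := [set x in W | red (x |: tset t)].

Lemma s_split : s = take (3 * j - 3) s ++ [:: v 0; v 1; v 2; v 3; v 4; v 5] ++ drop (3 * j + 3) s.
Proof.
rewrite -{1}(cat_take_drop (3 * j - 3) s); congr (_ ++ _).
rewrite -{1}(cat_take_drop 6 (drop _ s)) drop_drop (take_drop_mk x0); last lia.
congr (_ ++ _); congr drop; lia.
Qed.

Lemma notinWs y : y \in s -> y \notin W.
Proof. by move=> Hy; rewrite (disjointFl Dis) // inE. Qed.

Lemma notinWs' y : y \in W -> (y \in s) = false.
Proof. by move=> Hy; apply/negbTE/negP => /notinWs; rewrite Hy. Qed.

Lemma notinW k : k < 7 -> v k \notin W.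
Proof. move=> Hk; apply: notinWs; apply: mem_nth; rewrite Ss; lia. Qed.

Lemma setin4 (a b c d : 'I_N) : [set y in [:: a; b; c; d]] = c |: [set y in [:: a; b; d]].
Proof.
apply/setP => y; rewrite !inE.
by case: (y == a); case: (y == b); case: (y == c); case: (y == d).
Qed.

Lemma config (k1 k2 k3 k4 k5 : nat) (x1 x2 x3 : 'I_N) :
  perm_eq [:: k1; k2; k3; k4; k5] [:: 1; 2; 3; 4; 5] ->
  x1 \in R [:: 0; k3; k1] -> x2 \in R [:: k1; k4; k2] -> x3 \in R [:: k2; k5; 6] ->
  uniq [:: x1; x2; x3] -> False.
Proof.
move=> Hp; rewrite !inE => /andP [W1 R1] /andP [W2 R2] /andP [W3 R3] Ux.
pose A := take (3 * j - 3) s; pose C := drop (3 * j + 3) s.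
pose mid' := [:: v 0; v k3; x1; v k1; v k4; x2; v k2; v k5; x3].
have sE : s = A ++ [:: v 0; v 1; v 2; v 3; v 4; v 5] ++ C by exact: s_split.
have sA : size A = 3 * j - 3 by rewrite size_take Ss; case: ifP; lia.
have sC : size C = 3 * n + 1 - (3 * j + 3) by rewrite size_drop Ss.
apply: Max; exists [set x1; x2; x3], (A ++ mid' ++ C), 2, j.
have Hperm : perm_eq (A ++ mid' ++ C) (s ++ [:: x1; x2; x3]).
  have P1 : perm_eq [:: k3; k1; k4; k2; k5] [:: 1; 2; 3; 4; 5].
    apply: perm_trans Hp. apply/permP => P /=.
    by case: (P k1); case: (P k2); case: (P k3); case: (P k4); case: (P k5).
  have P2 := perm_map v P1.
  rewrite [in X in perm_eq _ X]sE -catA perm_cat2l perm_sym perm_catAC perm_sym; apply: perm_cat => //.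
  rewrite /mid' perm_cons.
  apply: (@perm_trans _ ([seq v i | i <- [:: k3; k1; k4; k2; k5]] ++ [:: x1; x2; x3])); last first.
    exact: (perm_cat P2 (perm_refl [:: x1; x2; x3])).
  apply/permP => P /=.
  by case: (P x1); case: (P x2); case: (P x3); case: (P (v k1)); case: (P (v k2)); case: (P (v k3)); case: (P (v k4)); case: (P (v k5)).
have n2 : 1 < n by clear - jn j1; lia.
have CE : C = v 6 :: drop (3 * j + 4) s.
  rewrite /C (drop_nth x0); last by rewrite Ss; clear - jn j1; lia.
  rewrite /v (_ : 3 * j - 3 + 6 = 3 * j + 3); last by clear - j1; lia.
  by rewrite -addnS.
have Epre : take (3 * j - 2) (A ++ mid' ++ C) = take (3 * j - 2) s.
  rewrite [in RHS]sE !take_cat sA.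
  have H : (3 * j - 2 < 3 * j - 3) = false by apply/negbTE; clear - j1; lia.
  rewrite H (_ : 3 * j - 2 - (3 * j - 3) = 1) //; clear - j1; lia.
have Hpre : forall p, 1 <= p <= j - 1 -> pedge (A ++ mid' ++ C) p = pedge s p.
  move=> p Hq; rewrite /pedge (take4_prefix Epre) //; clear - Hq j1; lia.
have Hsuf : forall p, j + 2 + 1 <= p <= n + 1 -> pedge (A ++ mid' ++ C) p = pedge s p.-1.
  move=> p Hq; rewrite /pedge [in RHS]sE !catA.
  rewrite (@drop_shift _ (A ++ mid') (A ++ [:: v 0; v 1; v 2; v 3; v 4; v 5]) C (3 * p.-1) (3 * p.-2)) //;
    rewrite !size_cat sA /=; clear - Hq j1; lia.
have Ej : pedge (A ++ mid' ++ C) j = [set y in [:: v 0; v k3; x1; v k1]].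
  rewrite /pedge (_ : 3 * j.-1 = size A); last by rewrite sA; clear - j1; lia.
  by rewrite drop_size_cat.
have Ej1 : pedge (A ++ mid' ++ C) j.+1 = [set y in [:: v k1; v k4; x2; v k2]].
  rewrite /pedge (_ : 3 * j.+1.-1 = 3 + size A); last by rewrite sA; clear - j1; lia.
  by rewrite -drop_drop drop_size_cat.
have Ej2 : pedge (A ++ mid' ++ C) j.+2 = [set y in [:: v k2; v k5; x3; v 6]].
  rewrite /pedge (_ : 3 * j.+2.-1 = 6 + size A); last by rewrite sA; clear - j1; lia.
  rewrite -drop_drop drop_size_cat // /mid' /=. have -> : take 1 C = [:: v 6] by rewrite CE /= take0. by [].
split; split.
- by apply/subsetP => y; rewrite !inE; case/orP => [/orP [] |] /eqP ->.
- by rewrite n2.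
- by rewrite j1; clear - jn j1; lia.
- split.
  + rewrite (perm_uniq Hperm) cat_uniq Us Ux /= !andbT.
    by rewrite !negb_or !(notinWs' W1) ?(notinWs' W2) ?(notinWs' W3).
  + by rewrite !size_cat sA sC /=; clear - jn j1; lia.
  + move=> p Hq.
    have [Hq1|Hq1] := leqP p (j - 1); first by rewrite Hpre ?Rs //; clear - Hq Hq1 j1 jn; lia.
    have [Hq2|Hq2] := leqP (j + 3) p; first by rewrite Hsuf ?Rs //; clear - Hq Hq2 j1 jn; lia.
    have : p = j \/ p = j.+1 \/ p = j.+2 by clear - Hq1 Hq2 j1 jn; lia.
    case=> [->|[->|->]].
    * by rewrite Ej setin4.
    * by rewrite Ej1 setin4.
    * by rewrite Ej2 setin4.
- exact: Hpre.
- exact: Hsuf.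
- apply/setP => y; rewrite inE (perm_mem Hperm) !inE mem_cat !inE.
  by rewrite -!orbA.
- move=> _ w; rewrite [in RHS]sE; exact: head_cat_cons.
- move=> _ w; rewrite [in RHS]sE catA [in RHS]catA; apply: last_cat_ne.
  by rewrite sC; clear - jn j1; lia.
Qed.

Lemma vinj a b : a < 7 -> b < 7 -> (v a == v b) = (a == b).
Proof.
move=> ha hb; rewrite /v nth_uniq ?eqn_add2l // Ss; clear - ha hb jn j1; lia.
Qed.

Lemma pedge_j : pedge s j = [set y in [:: v 0; v 1; v 2; v 3]].
Proof.
rewrite /pedge (_ : 3 * j.-1 = 3 * j - 3); last by clear - j1; lia.
rewrite (take_drop_mk x0) //; rewrite Ss; clear - j1 jn; lia.
Qed.

Lemma pedge_j1 : pedge s j.+1 = [set y in [:: v 3; v 4; v 5; v 6]].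
Proof.
rewrite /pedge (_ : 3 * j.+1.-1 = 3 * j - 3 + 3); last by clear - j1; lia.
rewrite (take_drop_mk x0); last by rewrite Ss; clear - j1 jn; lia.
by rewrite /mkseq /= -!addnA.
Qed.

Lemma inU k : k < 7 -> v k \in pedge s j :|: pedge s j.+1.
Proof.
rewrite pedge_j pedge_j1.
by case: k => [|[|[|[|[|[|[|]]]]]]] //= _; rewrite !inE eqxx ?orbT.
Qed.

Lemma Rperm t t' : perm_eq t t' -> R t = R t'.
Proof.
move=> P; apply/setP => y; rewrite !inE /tset.
suff -> : [set y in [seq v i | i <- t]] = [set y in [seq v i | i <- t']] by [].
by apply/setP => z; rewrite !inE (perm_mem (perm_map v P)).
Qed.

Lemma RsubW t : R t \subset W.
Proof. by apply/subsetP => y; rewrite inE => /andP []. Qed.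

Lemma cardRD t : #|W :\: R t| = #|W| - #|R t|.
Proof. by rewrite cardsD (setIidPr (RsubW t)). Qed.

Lemma L1 (x a b c : 'I_N) : [set x; a; b; c] = x |: [set y in [:: a; b; c]].
Proof. by apply/setP => y; rewrite !inE !orbA. Qed.

Lemma L2 (y a b c : 'I_N) : [set a; b; c; y] = y |: [set z in [:: a; b; c]].
Proof.
apply/setP => z; rewrite !inE.
by case: (z == a); case: (z == b); case: (z == c); case: (z == y).
Qed.

Lemma L3 (x x' a b c : 'I_N) : x \notin [:: a; b; c] ->
  ([set x; a; b; c] :\ x) :|: [set x'] = x' |: [set y in [:: a; b; c]].
Proof.
rewrite !inE => Hx; apply/setP => z; rewrite !inE.
case: (eqVneq z x) => [->|_] /=.
  by move: Hx; case: (x == a); case: (x == b); case: (x == c); case: (x == x').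
by case: (z == a); case: (z == b); case: (z == c); case: (z == x').
Qed.

Lemma L4 (y y' a b c : 'I_N) : y \notin [:: a; b; c] ->
  ([set a; b; c; y] :\ y) :|: [set y'] = y' |: [set z in [:: a; b; c]].
Proof.
rewrite !inE => Hx; apply/setP => z; rewrite !inE.
case: (eqVneq z y) => [->|_] /=.
  by move: Hx; case: (y == a); case: (y == b); case: (y == c); case: (y == y').
by case: (z == a); case: (z == b); case: (z == c); case: (z == y').
Qed.

Definition Goal := exists (x y a1 a2 a3 a4 a5 : 'I_N),
    [/\ x \in W, y \in W, x != y,
        uniq [:: a1; a2; a3; a4; a5] &
        all (fun a => a \in pedge s j :|: pedge s j.+1) [:: a1; a2; a3; a4; a5]] /\
    [/\ ~~ red [set x; a1; a2; a3],
        ~~ red [set a3; a4; a5; y],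
        (exists v, [/\ v \in pedge s j.+1, v \notin pedge s j &
                       v \notin [:: a1; a2; a3; a4; a5]]) &
        exists W1 W2 : {set 'I_N},
          [/\ W1 \subset W, W2 \subset W, #|W| - 2 <= #|W1|, #|W| - 3 <= #|W2| &
              forall x' y', x' \in W1 -> y' \in W2 -> x' != y' ->
                ~~ red (([set x; a1; a2; a3] :\ x) :|: [set x']) /\
                ~~ red (([set a3; a4; a5; y] :\ y) :|: [set y'])]].

Lemma notin3 (w : 'I_N) a b c : w \in W -> a < 7 -> b < 7 -> c < 7 -> w \notin [:: v a; v b; v c].
Proof.
move=> hw ha hb hc; rewrite !inE; apply/negP => /or3P [] /eqP E;
  [move: (notinW ha) | move: (notinW hb) | move: (notinW hc)]; by rewrite -E hw.
Qed.

Lemma PG a1 a2 a3 a4 a5 t1 t2 : checkp a1 a2 a3 a4 a5 t1 t2 -> #|R t1| <= 2 -> #|R t2| <= 3 -> Goal.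
Proof.
case/and5P => Hu /allP Ha Hz P1 P2 c1 c2.
rewrite (Rperm P1) in c1; rewrite (Rperm P2) in c2.
have h1 := Ha a1; have h2 := Ha a2; have h3 := Ha a3; have h4 := Ha a4; have h5 := Ha a5.
rewrite !inE !eqxx ?orbT in h1 h2 h3 h4 h5.
have {h1 h2 h3 h4 h5} [h1 h2 h3 h4 h5] : [/\ a1 < 7, a2 < 7, a3 < 7, a4 < 7 & a5 < 7]
  by split; [exact: h1 | exact: h2 | exact: h3 | exact: h4 | exact: h5].
pose W1 := W :\: R [:: a1; a2; a3]; pose W2 := W :\: R [:: a3; a4; a5].
have cW1 : #|W| - 2 <= #|W1| by rewrite /W1 cardRD; clear - c1; lia.
have cW2 : #|W| - 3 <= #|W2| by rewrite /W2 cardRD; clear - c2; lia.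
have : 0 < #|W2| by clear - cW2 W4; lia.
case/card_gt0P => y hy.
have : 0 < #|W1 :\ y|.
  move: cW1 W4; rewrite (cardsD1 y W1); case: (y \in W1) => /=; move: #|W| #|W1 :\ y| => p q; clear; lia.
case/card_gt0P => x; rewrite inE => /andP [xy hx].
have hxW : x \in W by move: hx; rewrite inE => /andP [].
have hyW : y \in W by move: hy; rewrite inE => /andP [].
have blue1 : forall x', x' \in W1 -> ~~ red (x' |: tset [:: a1; a2; a3]).
  by move=> x'; rewrite !inE => /andP [] /negP H hw; apply/negP => Hr; apply: H; rewrite hw.
have blue2 : forall y', y' \in W2 -> ~~ red (y' |: tset [:: a3; a4; a5]).
  by move=> x'; rewrite !inE => /andP [] /negP H hw; apply/negP => Hr; apply: H; rewrite hw.
exists x, y, (v a1), (v a2), (v a3), (v a4), (v a5); split; first split.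
- exact: hxW.
- exact: hyW.
- by move: xy; rewrite inE.
- rewrite (map_inj_in_uniq (f := v) (s := [:: a1; a2; a3; a4; a5])) //.
  move=> a b ha hb /eqP; rewrite vinj ?(Ha a ha) ?(Ha b hb) //; by move/eqP.
- rewrite -[[:: v a1; _; _; _; _]]/(map v [:: a1; a2; a3; a4; a5]) all_map; apply/allP => a ha; exact: inU (Ha a ha).
split.
- rewrite L1; exact: blue1.
- rewrite L2; exact: blue2.
- case/allPn: Hz => z hz hz'.
  have hz7 : 3 < z < 7 by move: hz; rewrite !inE => /or3P [] /eqP ->.
  exists (v z); split.
  + rewrite pedge_j1; move: hz; rewrite !inE => /or3P [] /eqP ->; by rewrite eqxx ?orbT.
  + rewrite pedge_j !inE !vinj //; try (clear - hz7; lia).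
  + apply/negP => /(@mapP _ _ v [:: a1; a2; a3; a4; a5]) [a ha /eqP].
    rewrite vinj ?(Ha a ha) //; last by clear - hz7; lia.
    by move/eqP => E; move: hz'; rewrite E ha.
- exists W1, W2; split.
  + exact: subsetDl.
  + exact: subsetDl.
  + exact: cW1.
  + exact: cW2.
  + move=> x' y' hx' hy' _; split.
    * rewrite L3; first exact: blue1.
      exact: notin3.
    * rewrite L4; first exact: blue2.
      exact: notin3.
Qed.

Lemma F3sdr (A B C : {set 'I_N}) :
  (forall x1 x2 x3, x1 \in A -> x2 \in B -> x3 \in C -> uniq [:: x1; x2; x3] -> False) ->
  [/\ F3 #|A| #|B| #|C|, F3 #|A| #|C| #|B|, F3 #|B| #|A| #|C|
    & [/\ F3 #|B| #|C| #|A|, F3 #|C| #|A| #|B| & F3 #|C| #|B| #|A|]].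
Proof.
move=> H; split; [| | | split] => hX hY hZ;
  have [x [y [z [hx hy hz]]]] := sdr3 hX hY hZ; rewrite /= !inE !negb_or => /and3P [/andP [u1 u2] u3 _];
  have s1 := u1; have s2 := u2; have s3 := u3; rewrite eq_sym in s1; rewrite eq_sym in s2; rewrite eq_sym in s3.
- by apply: (H x y z) => //=; rewrite !inE !negb_or ?u1 ?u2 ?u3 ?s1 ?s2 ?s3.
- by apply: (H x z y) => //=; rewrite !inE !negb_or ?u1 ?u2 ?u3 ?s1 ?s2 ?s3.
- by apply: (H y x z) => //=; rewrite !inE !negb_or ?u1 ?u2 ?u3 ?s1 ?s2 ?s3.
- by apply: (H z x y) => //=; rewrite !inE !negb_or ?u1 ?u2 ?u3 ?s1 ?s2 ?s3.
- by apply: (H y z x) => //=; rewrite !inE !negb_or ?u1 ?u2 ?u3 ?s1 ?s2 ?s3.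
- by apply: (H z y x) => //=; rewrite !inE !negb_or ?u1 ?u2 ?u3 ?s1 ?s2 ?s3.
Qed.

Lemma CF k1 k2 k3 k4 k5 tA tB tC : checkc k1 k2 k3 k4 k5 tA tB tC ->
  [/\ F3 #|R tA| #|R tB| #|R tC|, F3 #|R tA| #|R tC| #|R tB|, F3 #|R tB| #|R tA| #|R tC|
    & [/\ F3 #|R tB| #|R tC| #|R tA|, F3 #|R tC| #|R tA| #|R tB| & F3 #|R tC| #|R tB| #|R tA|]].
Proof.
case/and4P => Hp PA PB PC; apply: F3sdr => x1 x2 x3.
rewrite -(Rperm PA) -(Rperm PB) -(Rperm PC); exact: config.
Qed.

Lemma main_goal : Goal.
Proof.
exact: (core (r := fun t => #|R t|) PG CF).
Qed.

End Main.

Theorem lemma2p3 (N : nat) (red : {set 'I_N} -> bool) (s : seq 'I_N) (n : nat)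
    (W : {set 'I_N}) :
  0 < N ->
  red_loose_path red s n ->
  [disjoint W & [set x in s]] ->
  4 <= #|W| ->
  maximal_wrt red s n W ->
  forall j, 1 <= j -> j + 1 <= n ->
  exists (x y a1 a2 a3 a4 a5 : 'I_N),
    [/\ x \in W, y \in W, x != y,
        uniq [:: a1; a2; a3; a4; a5] &
        all (fun a => a \in pedge s j :|: pedge s j.+1) [:: a1; a2; a3; a4; a5]] /\
    [/\ ~~ red [set x; a1; a2; a3],
        ~~ red [set a3; a4; a5; y],
        (exists v, [/\ v \in pedge s j.+1, v \notin pedge s j &
                       v \notin [:: a1; a2; a3; a4; a5]]) &
        exists W1 W2 : {set 'I_N},
          [/\ W1 \subset W, W2 \subset W, #|W| - 2 <= #|W1|, #|W| - 3 <= #|W2| &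
              forall x' y', x' \in W1 -> y' \in W2 -> x' != y' ->
                ~~ red (([set x; a1; a2; a3] :\ x) :|: [set x']) /\
                ~~ red (([set a3; a4; a5; y] :\ y) :|: [set y'])]].
Proof.
move=> N0 Hrp Dis W4 Max j j1 jn; case: Hrp => Us Ss Rs.
exact: (@main_goal N red s n W (Ordinal N0) j Us Ss Rs Dis Max j1 jn W4).
Qed.
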